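(* Let $H$ be a complex Hilbert space and let $Q \in \mathcal{L}(H)$ be an orthogonal projection. Then $Q$ satisfies the property $\mathcal{AN}^*$ if and only if the null space $\mathrm{Ker}\,Q$ is finite dimensional or the range $Q(H)$ is finite dimensional.
   Context: $\mathcal{L}(H)$ is the space of bounded linear operators on $H$. For a closed subspace $M \neq \{0\}$ of $H$ and $T \in \mathcal{L}(H)$, write $[T|_M] := \inf\{\|Tx\| : x \in M, \|x\|=1\}$; $T|_M$ satisfies $\mathcal{N}^*$ if there is $x_0 \in M$ with $\|x_0\|=1$ and $\|Tx_0\| = [T|_M]$. $T$ satisfies the property $\mathcal{AN}^*$ if $T|_M$ satisfies $\mathcal{N}^*$ for every closed subspace $M \neq \{0\}$ of $H$. *)

(* Defs.v *)
From mathcomp Require Import all_boot all_order all_algebra.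
From mathcomp Require Import complex.
From mathcomp Require Import boolp classical_sets reals.

Set Implicit Arguments.
Unset Strict Implicit.
Unset Printing Implicit Defensive.

Import Order.TTheory GRing.Theory Num.Theory.
Local Open Scope ring_scope.
Local Open Scope classical_set_scope.

Section Hilbert.
Variables (R : realType) (H : lmodType R[i]) (ip : H -> H -> R[i]).

Definition hnorm (x : H) : R := Num.sqrt (complex.Re (ip x x)).

Definition is_inner_product : Prop :=
  [/\ (forall (a : R[i]) (x y z : H), ip (a *: x + y) z = a * ip x z + ip y z),
      (forall x y : H, ip y x = conjc (ip x y)),
      (forall x : H, 0 <= ip x x) &
      (forall x : H, ip x x = 0 -> x = 0)].

Definition hcauchy (u : nat -> H) : Prop :=
  forall e : R, 0 < e -> exists N : nat,
    forall m n : nat, (N <= m)%N -> (N <= n)%N -> hnorm (u m - u n) < e.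

Definition hconverges (u : nat -> H) (l : H) : Prop :=
  forall e : R, 0 < e -> exists N : nat,
    forall n : nat, (N <= n)%N -> hnorm (u n - l) < e.

Definition hcomplete : Prop :=
  forall u : nat -> H, hcauchy u -> exists l : H, hconverges u l.

Definition is_hilbert : Prop := is_inner_product /\ hcomplete.

Definition bounded_linear (T : H -> H) : Prop :=
  (forall (a : R[i]) (x y : H), T (a *: x + y) = a *: T x + T y) /\
  (exists c : R, forall x : H, hnorm (T x) <= c * hnorm x).

Definition orth_projection (Q : H -> H) : Prop :=
  [/\ bounded_linear Q,
      (forall x : H, Q (Q x) = Q x) &
      (forall x y : H, ip (Q x) y = ip x (Q y))].

Definition closed_subspace (M : set H) : Prop :=
  [/\ M 0,
      (forall (a : R[i]) (x y : H), M x -> M y -> M (a *: x + y)) &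
      (forall (u : nat -> H) (l : H), (forall n, M (u n)) -> hconverges u l -> M l)].

Definition lower_bound_on (T : H -> H) (M : set H) : R :=
  inf [set hnorm (T x) | x in [set x | M x /\ hnorm x = 1]].

Definition satisfies_Nstar (T : H -> H) (M : set H) : Prop :=
  exists x0 : H, [/\ M x0, hnorm x0 = 1 & hnorm (T x0) = lower_bound_on T M].

Definition satisfies_ANstar (T : H -> H) : Prop :=
  forall M : set H, closed_subspace M -> M <> [set 0] -> satisfies_Nstar T M.

Definition kernel (T : H -> H) : set H := [set x | T x = 0].
(* the range Q(H) is classical_sets' [range Q] = Q @` setT *)

Definition finite_dim (S : set H) : Prop :=
  exists s : seq H, (forall v, v \in s -> S v) /\
    forall x, S x -> exists c : 'I_(size s) -> R[i],
      x = \sum_(i < size s) c i *: s`_i.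

End Hilbert.

(* Main.v *)
Require Import Defs.
From mathcomp Require Import all_boot all_order all_algebra.
From mathcomp Require Import complex.
From mathcomp Require Import boolp classical_sets reals.
From mathcomp Require Import topology normedtype sequences.
From mathcomp Require Import ring lra.
Set Implicit Arguments. Unset Strict Implicit. Unset Printing Implicit Defensive.
Import Order.TTheory GRing.Theory Num.Theory.
Import numFieldNormedType.Exports.
Local Open Scope ring_scope.
Local Open Scope complex_scope.
Local Open Scope classical_set_scope.

Lemma BWr (R : realType) (u : nat -> R) (B : R) : (forall n, `|u n| <= B) ->
  exists f : nat -> nat, (forall n m, (n < m)%N -> (f n < f m)%N) /\
  exists L, forall e, 0 < e -> exists N, forall n, (N <= n)%N -> `|u (f n) - L| < e.
Proof.
move=> hB.
have hb : bounded_fun u.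
  exists B; split; first exact: num_real.
  move=> M hM x _ /=. have := hB x. lra.
have [f hf hc] := bolzano_weierstrass hb.
exists f; split.
  by move=> n m nm; have := hf m n; rewrite !leEnat => h; rewrite ltnNge h -ltnNge.
exists (lim ((u \o f) @ \oo)) => e e0.
have := (proj1 (cvgrPdistC_lt _ _) hc) e e0.
case=> N _ hN. exists N => n hn. exact: hN.
Qed.

Section Hilb.
Variables (R : realType) (H : lmodType R[i]) (ip : H -> H -> R[i]).
Hypothesis ipL : forall (a : R[i]) (x y z : H), ip (a *: x + y) z = a * ip x z + ip y z.
Hypothesis ipC : forall x y : H, ip y x = conjc (ip x y).
Hypothesis ip_ge0 : forall x : H, 0 <= ip x x.
Hypothesis ip_eq0 : forall x : H, ip x x = 0 -> x = 0.

Local Notation Re := complex.Re.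
Local Notation Im := complex.Im.

Lemma conjcD (a b : R[i]) : conjc (a + b) = conjc a + conjc b.
Proof. by case: a => ? ?; case: b => ? ?; apply/eqP; rewrite eq_complex /= opprD !eqxx. Qed.
Lemma conjcM (a b : R[i]) : conjc (a * b) = conjc a * conjc b.
Proof. case: a => ? ?; case: b => ? ?; apply/eqP; rewrite eq_complex /=; apply/andP; split; apply/eqP; ring. Qed.
Lemma conjcN (a : R[i]) : conjc (- a) = - conjc a.
Proof. by case: a => ? ?. Qed.
Lemma conjcK' (a : R[i]) : conjc (conjc a) = a.
Proof. by case: a => ? ? /=; rewrite opprK. Qed.

Lemma ip0l z : ip 0 z = 0.
Proof. have h := ipL (-1) 0 0 z. by rewrite scaler0 addr0 mulN1r addNr in h. Qed.
Lemma ipDl x y z : ip (x + y) z = ip x z + ip y z.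
Proof. by have := ipL 1 x y z; rewrite scale1r mul1r. Qed.
Lemma ipZl a x z : ip (a *: x) z = a * ip x z.
Proof. by rewrite -[a *: x]addr0 ipL ip0l addr0. Qed.
Lemma ipNl x z : ip (- x) z = - ip x z.
Proof. by rewrite -scaleN1r ipZl mulN1r. Qed.
Lemma ipBl x y z : ip (x - y) z = ip x z - ip y z.
Proof. by rewrite ipDl ipNl. Qed.
Lemma ip0r z : ip z 0 = 0.
Proof. by rewrite ipC ip0l conjc0. Qed.
Lemma ipDr x y z : ip z (x + y) = ip z x + ip z y.
Proof. by rewrite ipC ipDl conjcD -!ipC. Qed.
Lemma ipZr a x z : ip z (a *: x) = conjc a * ip z x.
Proof. by rewrite ipC ipZl conjcM -ipC. Qed.
Lemma ipNr x z : ip z (- x) = - ip z x.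
Proof. by rewrite ipC ipNl conjcN -ipC. Qed.
Lemma ipBr x y z : ip z (x - y) = ip z x - ip z y.
Proof. by rewrite ipDr ipNr. Qed.

Lemma ip_sum_l (I : Type) (r : seq I) (F : I -> H) z :
  ip (\sum_(i <- r) F i) z = \sum_(i <- r) ip (F i) z.
Proof.
elim: r => [|a r IH]; first by rewrite !big_nil ip0l.
by rewrite !big_cons ipDl IH.
Qed.

Definition nsq x := Re (ip x x).
Lemma ip_self x : ip x x = (nsq x)%:C.
Proof. have := ip_ge0 x; rewrite /nsq; case: (ip x x) => a b. rewrite lecE /=. by move=> /andP[/eqP -> _]. Qed.
Lemma nsq_ge0 x : 0 <= nsq x.
Proof. by have := ip_ge0 x; rewrite ip_self lecR. Qed.
Lemma nsq_eq0 x : nsq x = 0 -> x = 0.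
Proof. by move=> h; apply: ip_eq0; rewrite ip_self h. Qed.
Lemma nsq0 : nsq 0 = 0.
Proof. by rewrite /nsq ip0l. Qed.

Lemma hnorm_ge0 x : 0 <= hnorm ip x.
Proof. exact: sqrtr_ge0. Qed.
Lemma hnorm_sq x : hnorm ip x ^+ 2 = nsq x.
Proof. by rewrite /hnorm sqr_sqrtr // nsq_ge0. Qed.
Lemma hnormE x : hnorm ip x = Num.sqrt (nsq x).
Proof. by []. Qed.
Lemma hnorm0 : hnorm ip 0 = 0.
Proof. by rewrite hnormE nsq0 sqrtr0. Qed.
Lemma hnorm_eq0 x : hnorm ip x = 0 -> x = 0.
Proof. by move=> h; apply: nsq_eq0; rewrite -hnorm_sq h expr0n. Qed.

Lemma nsq_sub x y (s : R[i]) :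
  nsq (x - s *: y) = nsq x - 2 * Re (conjc s * ip x y) + (Re s ^+ 2 + Im s ^+ 2) * nsq y.
Proof.
rewrite {1}/nsq ipBl !ipBr !ipZl !ipZr ip_self (ip_self y) (ipC x y).
case: (ip x y) => a b; case: s => c d /=. ring.
Qed.

Lemma nsq_add x y : nsq (x + y) = nsq x + 2 * Re (ip x y) + nsq y.
Proof.
rewrite {1}/nsq !ipDl !ipDr ip_self (ip_self y) (ipC x y).
case: (ip x y) => a b /=. ring.
Qed.

Lemma CS x y : Re (ip x y) ^+ 2 + Im (ip x y) ^+ 2 <= nsq x * nsq y.
Proof.
have [n0|npos] := eqVneq (nsq y) 0.
  by rewrite n0 (nsq_eq0 n0) ip0r mulr0 /= expr0n /= addr0.
have ny : 0 < nsq y by rewrite lt_def npos nsq_ge0.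
have := nsq_ge0 (x - (ip x y * (nsq y)^-1%:C) *: y).
rewrite nsq_sub.
have hk : nsq y * (nsq y)^-1 = 1 by rewrite mulfV.
move: hk ny; set n := nsq y; set k := n^-1; set nx := nsq x.
case: (ip x y) => a b /= hk ny h.
have h2 := mulr_ge0 (ltW ny) h.
nra.
Qed.


Local Notation hn := (hnorm ip).
Definition cmod (a : R[i]) : R := Num.sqrt (Re a ^+ 2 + Im a ^+ 2).

Lemma sq_le_abs (a b : R) : 0 <= b -> a ^+ 2 <= b ^+ 2 -> `|a| <= b.
Proof. move=> hb h. rewrite -(@ler_pXn2r _ 2) // ?nnegrE //. by rewrite real_normK ?num_real. Qed.

Lemma Re_ip_le x y : `|Re (ip x y)| <= hn x * hn y.
Proof.
apply: sq_le_abs; first by rewrite mulr_ge0 // hnorm_ge0.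
rewrite exprMn !hnorm_sq. have := CS x y. have := sqr_ge0 (Im (ip x y)). lra.
Qed.
Lemma Im_ip_le x y : `|Im (ip x y)| <= hn x * hn y.
Proof.
apply: sq_le_abs; first by rewrite mulr_ge0 // hnorm_ge0.
rewrite exprMn !hnorm_sq. have := CS x y. have := sqr_ge0 (Re (ip x y)). lra.
Qed.
Lemma cmod_ge0 a : 0 <= cmod a. Proof. exact: sqrtr_ge0. Qed.
Lemma cmod_ip_le x y : cmod (ip x y) <= hn x * hn y.
Proof.
rewrite /cmod -(@ler_pXn2r _ 2) ?nnegrE ?sqrtr_ge0 ?mulr_ge0 ?hnorm_ge0 //.
rewrite sqr_sqrtr ?addr_ge0 ?sqr_ge0 // exprMn !hnorm_sq. exact: CS.
Qed.
Lemma cmod_eq0 a : cmod a = 0 -> a = 0.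
Proof.
rewrite /cmod => /eqP; rewrite sqrtr_eq0 => h.
have h1 := sqr_ge0 (Re a); have h2 := sqr_ge0 (Im a).
have e1 : Re a ^+ 2 = 0 by lra. have e2 : Im a ^+ 2 = 0 by lra.
move: e1 e2 => /eqP; rewrite sqrf_eq0 => /eqP e1 /eqP; rewrite sqrf_eq0 => /eqP e2.
by move: e1 e2; clear h h1 h2; case: a => p q /= -> ->.
Qed.
Lemma Re_le_cmod a : `|Re a| <= cmod a.
Proof. apply: sq_le_abs; first exact: cmod_ge0. rewrite sqr_sqrtr ?addr_ge0 ?sqr_ge0 //. have := sqr_ge0 (Im a). lra. Qed.
Lemma Im_le_cmod a : `|Im a| <= cmod a.
Proof. apply: sq_le_abs; first exact: cmod_ge0. rewrite sqr_sqrtr ?addr_ge0 ?sqr_ge0 //. have := sqr_ge0 (Re a). lra. Qed.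
Lemma cmod_le a : cmod a <= `|Re a| + `|Im a|.
Proof.
rewrite /cmod -(@ler_pXn2r _ 2) ?nnegrE ?sqrtr_ge0 ?addr_ge0 ?normr_ge0 //.
rewrite sqr_sqrtr ?addr_ge0 ?sqr_ge0 // -[Re a ^+ 2]real_normK ?num_real // -[Im a ^+ 2]real_normK ?num_real //.
have := normr_ge0 (Re a); have := normr_ge0 (Im a). nra.
Qed.
Lemma cmodR (r : R) : cmod r%:C = `|r|.
Proof. by rewrite /cmod /= expr0n /= addr0 sqrtr_sqr. Qed.

Lemma hnormD x y : hn (x + y) <= hn x + hn y.
Proof.
have hx := hnorm_ge0 x; have hy := hnorm_ge0 y.
rewrite -[hn (x + y)]ger0_norm ?hnorm_ge0 //.
apply: sq_le_abs; first by rewrite addr_ge0.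
rewrite hnorm_sq nsq_add -!hnorm_sq.
have := Re_ip_le x y. have := ler_norm (Re (ip x y)). nra.
Qed.
Lemma nsqZ a x : nsq (a *: x) = (Re a ^+ 2 + Im a ^+ 2) * nsq x.
Proof. rewrite /nsq ipZl ipZr ip_self. case: a => ? ? /=. ring. Qed.
Lemma hnormZ a x : hn (a *: x) = cmod a * hn x.
Proof. by rewrite hnormE nsqZ sqrtrM ?addr_ge0 ?sqr_ge0. Qed.
Lemma hnormRZ (r : R) x : hn (r%:C *: x) = `|r| * hn x.
Proof. by rewrite hnormZ cmodR. Qed.
Lemma hnormN x : hn (- x) = hn x.
Proof. by rewrite -scaleN1r hnormZ /cmod /= oppr0 expr0n /= addr0 sqrrN expr1n sqrtr1 mul1r. Qed.
Lemma hnormB x y : hn (x - y) = hn (y - x).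
Proof. by rewrite -hnormN opprB. Qed.
Lemma hnormB_le x y : hn x - hn y <= hn (x - y).
Proof. have := hnormD (x - y) y. rewrite subrK. lra. Qed.
Lemma hnorm_dist x y : `|hn x - hn y| <= hn (x - y).
Proof.
rewrite ler_norml hnormB_le andbT. have := hnormB_le y x. rewrite hnormB. lra.
Qed.

Lemma hnorm_unit x : x != 0 -> hn ((hn x)^-1%:C *: x) = 1.
Proof.
move=> x0; have hp : 0 < hn x.
  rewrite lt_def hnorm_ge0 andbT; apply/eqP => /hnorm_eq0 h; by rewrite h eqxx in x0.
by rewrite hnormRZ ger0_norm ?invr_ge0 ?hnorm_ge0 // mulVf // gt_eqF.
Qed.

Lemma le0_eps (a : R) : (forall e, 0 < e -> a < e) -> a <= 0.
Proof. move=> h; rewrite leNgt; apply/negP => a0. by have := h a a0; rewrite ltxx. Qed.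

Lemma small_inv (e : R) : 0 < e -> exists k : nat, k.+1%:R^-1 < e.
Proof. move=> e0. have [k hk] := ltr_add_invr e0. exists k. by rewrite add0r in hk. Qed.

Definition rconv (r : nat -> R) (L : R) :=
  forall e, 0 < e -> exists N, forall n, (N <= n)%N -> `|r n - L| < e.

Lemma hconv_uniq u l1 l2 : hconverges ip u l1 -> hconverges ip u l2 -> l1 = l2.
Proof.
move=> h1 h2. apply/eqP; rewrite -subr_eq0; apply/eqP; apply: hnorm_eq0. apply/eqP; rewrite eq_le hnorm_ge0 andbT.
apply: le0_eps => e e0.
have e2 : 0 < e / 2 by rewrite divr_gt0.
have [N1 hN1] := h1 _ e2; have [N2 hN2] := h2 _ e2.
have a1 := hN1 (maxn N1 N2) (leq_maxl _ _); have a2 := hN2 (maxn N1 N2) (leq_maxr _ _).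
rewrite hnormB in a1.
have := hnormD (l1 - u (maxn N1 N2)) (u (maxn N1 N2) - l2).
rewrite addrA subrK. lra.
Qed.

Lemma rconv_uniq r L1 L2 : rconv r L1 -> rconv r L2 -> L1 = L2.
Proof.
move=> h1 h2. apply/eqP; rewrite -subr_eq0 -normr_eq0; apply/eqP/eqP; rewrite eq_le normr_ge0 andbT.
apply: le0_eps => e e0.
have e2 : 0 < e / 2 by rewrite divr_gt0.
have [N1 hN1] := h1 _ e2; have [N2 hN2] := h2 _ e2.
have a1 := hN1 (maxn N1 N2) (leq_maxl _ _); have a2 := hN2 (maxn N1 N2) (leq_maxr _ _).
rewrite distrC in a1.
have := ler_normD (L1 - r (maxn N1 N2)) (r (maxn N1 N2) - L2).
rewrite addrA subrK. lra.
Qed.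

Lemma hconv_add u v l m : hconverges ip u l -> hconverges ip v m ->
  hconverges ip (fun n => u n + v n) (l + m).
Proof.
move=> h1 h2 e e0.
have e2 : 0 < e / 2 by rewrite divr_gt0.
have [N1 hN1] := h1 _ e2; have [N2 hN2] := h2 _ e2.
exists (maxn N1 N2) => n hnN.
have a1 := hN1 n (leq_trans (leq_maxl _ _) hnN); have a2 := hN2 n (leq_trans (leq_maxr _ _) hnN).
have -> : u n + v n - (l + m) = (u n - l) + (v n - m) by rewrite opprD addrACA.
have := hnormD (u n - l) (v n - m). lra.
Qed.

Lemma hconv_scale a u l : hconverges ip u l ->
  hconverges ip (fun n => a *: u n) (a *: l).
Proof.
move=> h e e0.
have c0 : 0 < cmod a + 1 by have := cmod_ge0 a; lra.
have [N hN] := h (e / (cmod a + 1)) (divr_gt0 e0 c0).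
exists N => n hnN; have := hN n hnN.
rewrite -scalerBr hnormZ => h1.
have h2 : cmod a * hn (u n - l) <= (cmod a + 1) * hn (u n - l).
  by apply: ler_wpM2r; [exact: hnorm_ge0| lra].
rewrite ltr_pdivlMr // mulrC in h1. lra.
Qed.

Lemma hconv_ext u v l : (forall n, u n = v n) -> hconverges ip u l -> hconverges ip v l.
Proof. by move=> e; have -> : u = v by apply/funext. Qed.

Lemma hconv_opp u l : hconverges ip u l -> hconverges ip (fun n => - u n) (- l).
Proof.
move=> h; have := hconv_scale (-1) h; rewrite scaleN1r.
by apply: hconv_ext => n; rewrite scaleN1r.
Qed.
Lemma hconv_sub u v l m : hconverges ip u l -> hconverges ip v m ->
  hconverges ip (fun n => u n - v n) (l - m).
Proof. by move=> h1 h2; apply: hconv_add h1 (hconv_opp h2). Qed.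
Lemma hconv_const l : hconverges ip (fun _ => l) l.
Proof. by move=> e e0; exists 0%N => n _; rewrite subrr hnorm0. Qed.

Definition incr (f : nat -> nat) := forall n m, (n < m)%N -> (f n < f m)%N.
Lemma incr_ge f : incr f -> forall n, (n <= f n)%N.
Proof. move=> hf; elim=> [|n IH] //. have := hf n n.+1 (ltnSn n). exact: leq_ltn_trans. Qed.
Lemma incr_comp f g : incr f -> incr g -> incr (f \o g).
Proof. by move=> hf hg n m nm; apply: hf; apply: hg. Qed.

Lemma hconv_subseq u l f : incr f -> hconverges ip u l -> hconverges ip (u \o f) l.
Proof.
move=> hf h e e0; have [N hN] := h e e0; exists N => n hnN.
apply: hN; exact: leq_trans hnN (incr_ge hf n).
Qed.
Lemma rconv_subseq r L f : incr f -> rconv r L -> rconv (r \o f) L.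
Proof.
move=> hf h e e0; have [N hN] := h e e0; exists N => n hnN.
apply: hN; exact: leq_trans hnN (incr_ge hf n).
Qed.

Definition lin (T : H -> H) := forall a x y, T (a *: x + y) = a *: T x + T y.
Section Lin.
Variable T : H -> H.
Hypothesis hT : lin T.
Lemma lin0 : T 0 = 0.
Proof. have := hT (-1) 0 0. by rewrite scaler0 addr0 scaleN1r addNr. Qed.
Lemma linD x y : T (x + y) = T x + T y.
Proof. by have := hT 1 x y; rewrite !scale1r. Qed.
Lemma linZ a x : T (a *: x) = a *: T x.
Proof. by have := hT a x 0; rewrite !addr0 lin0 addr0. Qed.
Lemma linN x : T (- x) = - T x.
Proof. by rewrite -scaleN1r linZ scaleN1r. Qed.
Lemma linB x y : T (x - y) = T x - T y.
Proof. by rewrite linD linN. Qed.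
End Lin.

Lemma hconv_bl T u l : bounded_linear ip T -> hconverges ip u l ->
  hconverges ip (fun n => T (u n)) (T l).
Proof.
move=> [hT [c hc]] h e e0.
have c0 : 0 < `|c| + 1 by have := normr_ge0 c; lra.
have [N hN] := h (e / (`|c| + 1)) (divr_gt0 e0 c0).
exists N => n hnN; have := hN n hnN.
rewrite -(linB hT) => h1.
have h2 := hc (u n - l).
have h3 : c * hn (u n - l) <= (`|c| + 1) * hn (u n - l).
  by apply: ler_wpM2r; [exact: hnorm_ge0| have := ler_norm c; lra].
rewrite ltr_pdivlMr // mulrC in h1. lra.
Qed.

Lemma hconv_norm u l : hconverges ip u l -> rconv (fun n => hn (u n)) (hn l).
Proof.
move=> h e e0; have [N hN] := h e e0; exists N => n hnN.
exact: le_lt_trans (hnorm_dist _ _) (hN n hnN).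
Qed.

Lemma ip_closed u l z : hconverges ip u l -> (forall k, ip (u k) z = 0) -> ip l z = 0.
Proof.
move=> h hk; apply: cmod_eq0; apply/eqP; rewrite eq_le cmod_ge0 andbT.
apply: le0_eps => e e0.
have c0 : 0 < hn z + 1 by have := hnorm_ge0 z; lra.
have [N hN] := h (e / (hn z + 1)) (divr_gt0 e0 c0).
have h1 := hN N (leqnn N).
have e1 : ip l z = - ip (u N - l) z by rewrite ipBl hk sub0r opprK.
have h2 := cmod_ip_le (u N - l) z.
have h3 : hn (u N - l) * hn z <= hn (u N - l) * (hn z + 1).
  by apply: ler_wpM2l; [exact: hnorm_ge0| lra].
rewrite ltr_pdivlMr // in h1.
have -> : cmod (ip l z) = cmod (ip (u N - l) z).
  by rewrite e1 /cmod; case: (ip (u N - l) z) => ? ? /=; rewrite !sqrrN.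
lra.
Qed.

Lemma hconv_cscale (a : nat -> R[i]) ar ai v :
  rconv (fun n => Re (a n)) ar -> rconv (fun n => Im (a n)) ai ->
  hconverges ip (fun n => a n *: v) ((ar +i* ai) *: v).
Proof.
move=> h1 h2 e e0.
have c0 : 0 < hn v + 1 by have := hnorm_ge0 v; lra.
have e2 : 0 < e / 2 / (hn v + 1) by rewrite !divr_gt0.
have [N1 hN1] := h1 _ e2; have [N2 hN2] := h2 _ e2.
exists (maxn N1 N2) => n hnN.
have a1 := hN1 n (leq_trans (leq_maxl _ _) hnN); have a2 := hN2 n (leq_trans (leq_maxr _ _) hnN).
rewrite -scalerBl hnormZ.
have hc := cmod_le (a n - (ar +i* ai)).
have E1 : Re (a n - (ar +i* ai)) = Re (a n) - ar by case: (a n).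
have E2 : Im (a n - (ar +i* ai)) = Im (a n) - ai by case: (a n).
rewrite E1 E2 in hc. move: hc; set c := cmod _ => hc.
have hcs : c * hn v <= c * (hn v + 1) by apply: ler_wpM2l; [exact: cmod_ge0| lra].
rewrite ltr_pdivlMr // in a1. rewrite ltr_pdivlMr // in a2.
have := cmod_ge0 (a n - (ar +i* ai)). have := hnorm_ge0 v.
nra.
Qed.


Definition subsp (S : set H) := S 0 /\ forall a x y, S x -> S y -> S (a *: x + y).

Lemma subspZ S a x : subsp S -> S x -> S (a *: x).
Proof. by move=> [S0 Sl] Sx; rewrite -[_ *: x]addr0; apply: Sl. Qed.
Lemma subspD S x y : subsp S -> S x -> S y -> S (x + y).
Proof. by move=> [S0 Sl] Sx Sy; rewrite -[x]scale1r; apply: Sl. Qed.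
Lemma subspB S x y : subsp S -> S x -> S y -> S (x - y).
Proof. by move=> hS Sx Sy; rewrite addrC -scaleN1r; apply: hS.2. Qed.
Lemma subsp_sum S n (F : 'I_n -> H) : subsp S -> (forall i, S (F i)) -> S (\sum_(i < n) F i).
Proof. move=> hS hF; apply: (big_ind S) => //; [exact: hS.1 | by move=> x y; apply: subspD]. Qed.

Lemma sum_delta (n j : nat) (G : nat -> R[i]) : (j < n)%N ->
  \sum_(i < n) G i * ((i : nat) == j)%:R = G j.
Proof.
move=> hj; rewrite (bigD1 (Ordinal hj)) //= eqxx mulr1 big1 ?addr0 // => i hi.
rewrite (_ : ((i : nat) == j) = false) ?mulr0 //; apply/negbTE; move: hi; apply: contra => /eqP e.
by apply/eqP; apply: val_inj.
Qed.

Definition ONL (l : seq H) := forall i j, (i < size l)%N -> (j < size l)%N ->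
  ip l`_i l`_j = (i == j)%:R.

Lemma ip_self1 u : hn u = 1 -> ip u u = 1.
Proof. by move=> h; rewrite ip_self -hnorm_sq h expr1n. Qed.

Lemma GS_step S l : subsp S -> ~ finite_dim S -> (forall v, v \in l -> S v) -> ONL l ->
  exists u, [/\ S u, ip u u = 1 & forall j, (j < size l)%N -> ip u l`_j = 0].
Proof.
move=> hS nfd lS hON.
have [v [Sv nv]] : exists v, S v /\ ~ exists c : 'I_(size l) -> R[i], v = \sum_(i < size l) c i *: l`_i.
  case: (pselect (exists v, S v /\ ~ exists c : 'I_(size l) -> R[i], v = \sum_(i < size l) c i *: l`_i)) => [//|h].
  exfalso; apply: nfd; exists l; split => // x Sx.
  case: (pselect (exists c : 'I_(size l) -> R[i], x = \sum_(i < size l) c i *: l`_i)) => // nc.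
  by exfalso; apply: h; exists x.
set w := v - \sum_(i < size l) (ip v l`_i) *: l`_i.
have Sw : S w.
  apply: subspB => //; apply: subsp_sum => // i; apply: subspZ => //; apply: lS; exact: mem_nth.
have hw : forall j, (j < size l)%N -> ip w l`_j = 0.
  move=> j hj; rewrite ipBl ip_sum_l.
  under eq_bigr => i _ do rewrite ipZl (hON i j (ltn_ord i) hj).
  by rewrite (@sum_delta _ _ (fun i => ip v l`_i)) // subrr.
have w0 : w != 0.
  apply/eqP => w0; apply: nv; exists (fun i => ip v l`_i).
  by apply/eqP; rewrite -subr_eq0; apply/eqP.
exists ((hn w)^-1%:C *: w); split.
- exact: subspZ.
- exact/ip_self1/hnorm_unit.
- by move=> j hj; rewrite ipZl hw // mulr0.
Qed.

Lemma GS_seq S : subsp S -> ~ finite_dim S ->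
  exists e : nat -> H, (forall n, S (e n)) /\ forall n m, ip (e n) (e m) = (n == m)%:R.
Proof.
move=> hS nfd.
have: forall l : seq H, exists u, ((forall v, v \in l -> S v) /\ ONL l) ->
    [/\ S u, ip u u = 1 & forall j, (j < size l)%N -> ip u l`_j = 0].
  move=> l; case: (pselect ((forall v, v \in l -> S v) /\ ONL l)) => [[h1 h2]|h].
    by have [u hu] := GS_step hS nfd h1 h2; exists u.
  by exists 0 => /h.
case/choice => g hg.
pose L := fix L n := if n is m.+1 then rcons (L m) (g (L m)) else [::].
have sizeL : forall n, size (L n) = n by elim=> //= n IH; rewrite size_rcons IH.
have nthL : forall n k, (k < n)%N -> (L n)`_k = g (L k).
  elim=> // n IH k hk /=; rewrite nth_rcons sizeL.
  move: hk; rewrite ltnS leq_eqVlt => /orP[/eqP->|kn]; first by rewrite ltnn eqxx.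
  by rewrite kn IH.
have inv : forall n, (forall v, v \in L n -> S v) /\ ONL (L n).
  elim=> [|n [IH1 IH2]]; first by split => // i j.
  have [Su hu hj] := hg _ (conj IH1 IH2).
  rewrite sizeL in hj.
  split.
    move=> v; rewrite /= mem_rcons inE => /orP[/eqP->|]; [done | exact: IH1].
  move=> i j; rewrite /= size_rcons sizeL !ltnS !nth_rcons sizeL.
  move=> hi0 hj0.
  have [ilt|ieq] : (i < n)%N \/ i = n by move: hi0; rewrite leq_eqVlt => /orP[/eqP->|->]; [right|left].
  - have [jlt|jeq] : (j < n)%N \/ j = n by move: hj0; rewrite leq_eqVlt => /orP[/eqP->|->]; [right|left].
    + rewrite ilt jlt; apply: IH2; by rewrite sizeL.
    + rewrite ilt jeq ltnn eqxx ipC hj // conjc0 (ltn_eqF ilt); done.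
  - have [jlt|jeq] : (j < n)%N \/ j = n by move: hj0; rewrite leq_eqVlt => /orP[/eqP->|->]; [right|left].
    + rewrite ieq jlt ltnn eqxx hj // (gtn_eqF jlt); done.
    + rewrite ieq jeq ltnn eqxx hu; done.
exists (fun n => g (L n)); split.
  by move=> n; case: (hg _ (inv n)).
have hgn : forall n k, (k < n)%N -> ip (g (L n)) (g (L k)) = 0.
  move=> n k kn; have [_ _ hj] := hg _ (inv n).
  by rewrite -(nthL n k kn) hj // sizeL.
move=> n m; case: (ltngtP n m) => [nm|mn|->].
- by rewrite ipC hgn // conjc0.
- by rewrite hgn.
- by have [_ -> _] := hg _ (inv m).
Qed.


Lemma hnorm_le x y : nsq x <= nsq y -> hn x <= hn y.
Proof. by move=> h; rewrite !hnormE; apply: ler_wsqrtr. Qed.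
Lemma hnorm_of_ip1 u : ip u u = 1 -> hn u = 1.
Proof. by rewrite ip_self hnormE => -[->]; rewrite sqrtr1. Qed.

Lemma closed_subspZ M a x : closed_subspace ip M -> M x -> M (a *: x).
Proof. by move=> [M0 Ml _] Mx; rewrite -[_ *: x]addr0; apply: Ml. Qed.
Lemma closed_subspD M x y : closed_subspace ip M -> M x -> M y -> M (x + y).
Proof. by move=> [M0 Ml _] Mx My; rewrite -[x]scale1r; apply: Ml. Qed.
Lemma closed_subspB M x y : closed_subspace ip M -> M x -> M y -> M (x - y).
Proof. by case=> _ Ml _ Mx My; rewrite addrC -scaleN1r; apply: Ml. Qed.
Lemma closed_subsp M : closed_subspace ip M -> subsp M.
Proof. by case. Qed.

Section Proj.
Variable Q : H -> H.
Hypothesis hQ : orth_projection ip Q.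
Lemma Qbl : bounded_linear ip Q. Proof. by case: hQ. Qed.
Lemma Qlin : lin Q. Proof. by case: hQ => -[]. Qed.
Lemma QQ x : Q (Q x) = Q x. Proof. by case: hQ. Qed.
Lemma Qsa x y : ip (Q x) y = ip x (Q y). Proof. by case: hQ. Qed.

Lemma pyth x : nsq x = nsq (Q x) + nsq (x - Q x).
Proof.
have h : ip (Q x) (x - Q x) = 0 by rewrite ipBr !Qsa QQ subrr.
have := nsq_add (Q x) (x - Q x); rewrite h [Q x + _]addrC subrK => ->.
by rewrite /= mulr0 addr0.
Qed.
Lemma hnQ_le x : hn (Q x) <= hn x.
Proof. apply: hnorm_le; rewrite (pyth x); have := nsq_ge0 (x - Q x); lra. Qed.
Lemma hnP_le x : hn (x - Q x) <= hn x.
Proof. apply: hnorm_le; rewrite (pyth x); have := nsq_ge0 (Q x); lra. Qed.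

Lemma kerQ_subsp : subsp (kernel Q).
Proof.
split; first exact: (lin0 Qlin).
by move=> a x y hx hy; rewrite /kernel /= Qlin hx hy scaler0 addr0.
Qed.
Lemma rangeQP y : range Q y <-> Q y = y.
Proof. by split => [[x _ <-]|h]; [rewrite QQ | exists y]. Qed.
Lemma rangeQ_subsp : subsp (range Q).
Proof.
split; first by apply/rangeQP; exact: (lin0 Qlin).
by move=> a x y /rangeQP hx /rangeQP hy; apply/rangeQP; rewrite Qlin hx hy.
Qed.

Lemma nec : satisfies_ANstar ip Q -> finite_dim (kernel Q) \/ finite_dim (range Q).
Proof.
move=> hAN.
case: (pselect (finite_dim (kernel Q))) => [h|nk]; first by left.
case: (pselect (finite_dim (range Q))) => [h|nr]; first by right.
exfalso.
have [e [eK eON]] := GS_seq kerQ_subsp nk.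
have [f [fR fON]] := GS_seq rangeQ_subsp nr.
have Qe n : Q (e n) = 0 by exact: eK.
have Qf n : Q (f n) = f n by apply/rangeQP.
have ief n m : ip (f n) (e m) = 0 by rewrite -(Qf n) Qsa Qe ip0r.
have ief' n m : ip (e n) (f m) = 0 by rewrite ipC ief conjc0.
pose c n : R := (n.+1%:R)^-1.
have c0 n : 0 < c n by rewrite invr_gt0 ltr0n.
pose M := [set x : H | (forall z, (forall n, ip z (e n) = 0) -> ip (x - Q x) z = 0) /\
                      forall n, ip x (f n) = (c n)%:C * ip x (e n)].
pose u n := e n + (c n)%:C *: f n.
have Qu n : Q (u n) = (c n)%:C *: f n by rewrite (linD Qlin) (linZ Qlin) Qe Qf add0r.
have Pu n : u n - Q (u n) = e n by rewrite Qu /u addrK.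
have Mu n : M (u n).
  split.
    by move=> z hz; rewrite Pu ipC hz conjc0.
  move=> m; rewrite /u !ipDl !ipZl ief' ief eON fON mulr0 addr0 add0r.
  by case: (eqVneq n m) => [->|nm]; rewrite ?eqxx // !mulr0.
have Mcl : closed_subspace ip M.
  split.
  - split; first by move=> z _; rewrite (lin0 Qlin) subrr ip0l.
    by move=> n; rewrite !ip0l mulr0.
  - move=> a x y [hx1 hx2] [hy1 hy2]; split.
      move=> z hz.
      have -> : a *: x + y - Q (a *: x + y) = a *: (x - Q x) + (y - Q y).
        by rewrite Qlin scalerBr opprD !addrA; congr (_ + _); rewrite addrAC.
      by rewrite ipL hx1 // hy1 // mulr0 addr0.
    by move=> n; rewrite !ipL hx2 hy2; ring.
  - move=> v l hv hl; split.
      move=> z hz; apply: (@ip_closed (fun k => v k - Q (v k))).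
        exact: hconv_sub hl (hconv_bl Qbl hl).
      by move=> k; apply: (hv k).1.
    move=> n.
    have : ip l (f n - (c n)%:C *: e n) = 0.
      apply: (ip_closed hl) => k.
      by rewrite ipBr ipZr conjc_real (hv k).2 subrr.
    by rewrite ipBr ipZr conjc_real => /eqP; rewrite subr_eq0 => /eqP.
have M0 : M <> [set 0].
  move=> hM; have : M (u 0%N) by [].
  rewrite hM /= => u00.
  have := congr1 (fun x => ip x (e 0%N)) u00.
  rewrite /= /u ipDl ipZl ief eON ip0l mulr0 addr0 eqxx => /eqP.
  by rewrite oner_eq0.
have [x0 [Mx0 hx0 hq]] := hAN M Mcl M0.
have lb : forall n, hn (Q x0) <= c n.
  move=> n; rewrite hq /lower_bound_on.
  set S := [set hnorm ip (Q x) | x in [set x | M x /\ hnorm ip x = 1]].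
  have Slb : has_lbound S by exists 0 => y [x _ <-]; exact: hnorm_ge0.
  have un0 : u n != 0.
    apply/eqP => h; have := congr1 (fun x => ip x (e n)) h.
    rewrite /= /u ipDl ipZl ief eON ip0l mulr0 addr0 eqxx => /eqP.
    by rewrite oner_eq0.
  pose v := (hn (u n))^-1%:C *: u n.
  have Sv : S (hn (Q v)) by exists v => //; split; [exact: closed_subspZ | exact: hnorm_unit].
  apply: le_trans (ge_inf Slb Sv) _.
  have hu1 : 1 <= hn (u n).
    have := hnP_le (u n); rewrite Pu hnorm_of_ip1 //; first by rewrite eON eqxx.
  have hu0 : 0 < hn (u n) by lra.
  have hf1 : hn (f n) = 1 by apply: hnorm_of_ip1; rewrite fON eqxx.
  rewrite /v (linZ Qlin) hnormRZ Qu hnormRZ hf1 mulr1.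
  rewrite ger0_norm ?invr_ge0 ?hnorm_ge0 // ger0_norm ?(ltW (c0 n)) //.
  have : (hn (u n))^-1 <= 1 by rewrite invf_le1.
  have := c0 n. nra.
have q0 : hn (Q x0) = 0.
  apply/eqP; rewrite eq_le hnorm_ge0 andbT; apply: le0_eps => ep hep.
  have [k hk] := small_inv hep; exact: le_lt_trans (lb k) hk.
have Qx0 : Q x0 = 0 := hnorm_eq0 q0.
have hxe : forall n, ip x0 (e n) = 0.
  move=> n; have := Mx0.2 n; rewrite -(Qf n) -Qsa Qx0 ip0l => /esym /eqP.
  rewrite mulf_eq0 => /orP[|/eqP //].
  by rewrite eq_complex /= (gt_eqF (c0 n)).
have : ip (x0 - Q x0) x0 = 0 := Mx0.1 x0 hxe.
rewrite Qx0 subr0 => /ip_eq0 x00.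
by move: hx0; rewrite x00 hnorm0 => /eqP; rewrite eq_sym oner_eq0.
Qed.
End Proj.


Fixpoint inspan (s : seq H) (x : H) : Prop :=
  if s is v :: s' then exists a, inspan s' (x - a *: v) else x = 0.

Lemma inspan0 s : inspan s 0.
Proof. by elim: s => //= v s IH; exists 0; rewrite scale0r subr0. Qed.
Lemma inspan_lin s a x y : inspan s x -> inspan s y -> inspan s (a *: x + y).
Proof.
elim: s x y => [|v s IH] x y /=; first by move=> -> ->; rewrite scaler0 addr0.
move=> [b hb] [c hc]; exists (a * b + c).
have -> : a *: x + y - (a * b + c) *: v = a *: (x - b *: v) + (y - c *: v).
  by rewrite scalerDl -scalerA scalerBr opprD !addrA; congr (_ - _); rewrite addrAC.
exact: IH.
Qed.
Lemma inspan_subsp s : subsp (inspan s).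
Proof. split; [exact: inspan0 | move=> a x y; exact: inspan_lin]. Qed.
Lemma inspan_head s v : inspan (v :: s) v.
Proof. by exists 1; rewrite scale1r subrr; apply: inspan0. Qed.
Lemma inspan_sub S s x : subsp S -> (forall v, v \in s -> S v) -> inspan s x -> S x.
Proof.
elim: s x => [|v s IH] x hS /=; first by move=> _ ->; exact: hS.1.
move=> hs [a ha].
have -> : x = a *: v + (x - a *: v) by rewrite addrC subrK.
apply: hS.2; first by apply: hs; rewrite inE eqxx.
apply: IH => // w hw; apply: hs; by rewrite inE hw orbT.
Qed.
Lemma inspan_sum s (c : 'I_(size s) -> R[i]) : inspan s (\sum_(i < size s) c i *: s`_i).
Proof.
elim: s c => [|v s IH] c /=; first by rewrite big_ord0.
exists (c ord0); rewrite big_ord_recl /= addrC addKr.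
under eq_bigr => i _ do rewrite add0n.
exact: (IH (fun i => c (lift ord0 i))).
Qed.
Lemma fd_inspan S : finite_dim S ->
  exists s, (forall v, v \in s -> S v) /\ forall x, S x -> inspan s x.
Proof.
move=> [s [h1 h2]]; exists s; split => // x Sx.
have [c ->] := h2 x Sx; exact: inspan_sum.
Qed.

Lemma SL (T : H -> H) : lin T -> forall s (F : set H), subsp F ->
  (forall x, F x -> inspan s (T x)) ->
  exists t, (forall v, v \in t -> F v) /\ forall x, F x -> exists y, inspan t y /\ T x = T y.
Proof.
move=> hT; elim=> [|v s IH] F hF hFs.
  exists [::]; split => // x Fx; exists 0; split => //=.
  by rewrite (lin0 hT); exact: hFs x Fx.
case: (pselect (exists u, F u /\ ~ inspan s (T u))) => [[u [Fu nu]]|hno]; last first.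
  have h : forall x, F x -> inspan s (T x).
    move=> x Fx; case: (pselect (inspan s (T x))) => // nx; exfalso; apply: hno; by exists x.
  by have [t [ht1 ht2]] := IH F hF h; exists t.
have [a ha] := hFs u Fu.
have a0 : a != 0 by apply/eqP => a0; apply: nu; move: ha; rewrite a0 scale0r subr0.
pose F' := [set x | F x /\ inspan s (T x)].
have hF' : subsp F'.
  split; first by split; [exact: hF.1 | rewrite (lin0 hT); exact: inspan0].
  move=> b x y [Fx sx] [Fy sy]; split; first exact: hF.2.
  by rewrite hT; apply: inspan_lin.
have [t' [ht1 ht2]] := IH F' hF' (fun x hx => hx.2).
exists (u :: t'); split.
  move=> w; rewrite inE => /orP[/eqP->//|/ht1 []//].
move=> x Fx; have [b hb] := hFs x Fx.
set x' := x - (b / a) *: u.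
have F'x' : F' x'.
  split; first by apply: subspB => //; apply: subspZ.
  have -> : T x' = (- (b / a)) *: (T u - a *: v) + (T x - b *: v).
    rewrite /x' (linB hT) (linZ hT) scalerBr scalerA mulNr mulfVK // !scaleNr opprK.
    by rewrite addrA (addrAC _ (b *: v)) addrK addrC.
  exact: inspan_lin.
have [y [hy Ty]] := ht2 x' F'x'.
exists (y + (b / a) *: u); split.
  by exists (b / a); rewrite addrK.
by rewrite (linD hT) (linZ hT) -Ty /x' (linB hT) (linZ hT) subrK.
Qed.

Lemma FD_inj (T : H -> H) s F : lin T -> subsp F ->
  (forall x, F x -> inspan s (T x)) -> (forall x, F x -> T x = 0 -> x = 0) ->
  exists t, (forall v, v \in t -> F v) /\ forall x, F x -> inspan t x.
Proof.
move=> hT hF hs hinj; have [t [h1 h2]] := SL hT hF hs.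
exists t; split => // x Fx; have [y [hy Txy]] := h2 x Fx.
have Fy := inspan_sub hF h1 hy.
have : x - y = 0 by apply: hinj; [exact: subspB | by rewrite (linB hT) Txy subrr].
by move/eqP; rewrite subr_eq0 => /eqP ->.
Qed.


Lemma inv_mono (k m : nat) : (k <= m)%N -> (m.+1%:R : R)^-1 <= (k.+1%:R)^-1.
Proof. by move=> km; rewrite lef_pV2 ?posrE ?ltr0n // ler_nat. Qed.

Lemma Kcompact t : forall x : nat -> H, (exists B, forall n, hn (x n) <= B) ->
  (forall n, inspan t (x n)) ->
  exists f, incr f /\ exists l, inspan t l /\ hconverges ip (x \o f) l.
Proof.
elim: t => [|v t IH] x [B hB] hx.
  exists id; split => //; exists 0; split => //.
  by move=> e e0; exists 0%N => n _; rewrite /= (hx n) subrr hnorm0.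
have [a ha] := choice hx.
pose w n := x n - a n *: v.
have B0 : 0 <= B by apply: le_trans (hB 0%N); exact: hnorm_ge0.
case: (pselect (inspan t v)) => [vt|nvt].
  have hxt n : inspan t (x n).
    have -> : x n = a n *: v + w n by rewrite /w addrC subrK.
    exact: inspan_lin vt (ha n).
  have [f [hf [l [hl hc]]]] := IH x (ex_intro _ B hB) hxt.
  exists f; split => //; exists l; split => //; exists 0; by rewrite scale0r subr0.
have [d [d0 hd]] : exists d, 0 < d /\ forall y, inspan t y -> d <= hn (v - y).
  case: (pselect (exists d, 0 < d /\ forall y, inspan t y -> d <= hn (v - y))) => // hno.
  exfalso.
  have hw : forall k : nat, exists y, inspan t y /\ hn (v - y) < k.+1%:R^-1.
    move=> k; case: (pselect (exists y, inspan t y /\ hn (v - y) < k.+1%:R^-1)) => // hk.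
    exfalso; apply: hno.
    exists k.+1%:R^-1; split; first by rewrite invr_gt0 ltr0n.
    move=> y hy; rewrite leNgt; apply/negP => h; apply: hk; by exists y.
  have [y hy] := choice hw.
  have hyb : exists B, forall n, hn (y n) <= B.
    exists (hn v + 1) => n.
    have := hnormD v (y n - v); rewrite [v + _]addrC subrK hnormB => h.
    have h2 := (hy n).2. have h3 : (n.+1%:R : R)^-1 <= 1 by rewrite invf_le1 ?ler1n ?ltr0n.
    apply: le_trans h _; rewrite lerD2l; exact: ltW (lt_le_trans h2 h3).
  have [f [hf [l [hl hc]]]] := IH y hyb (fun n => (hy n).1).
  have hcv : hconverges ip (y \o f) v.
    move=> e e0; have [k hk] := small_inv e0; exists k => n hnN.
    rewrite /= hnormB; apply: lt_le_trans (hy (f n)).2 _.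
    apply: le_trans (ltW hk); apply: inv_mono; exact: leq_trans hnN (incr_ge hf n).
  have lv := hconv_uniq hc hcv.
  by apply: nvt; rewrite -lv.
have ha_b : forall n, cmod (a n) <= B / d.
  move=> n; case: (eqVneq (a n) 0) => [->|an0].
    by rewrite /cmod /= expr0n /= addr0 sqrtr0 divr_ge0 // ltW.
  have h1 : d <= hn (v - (- (a n)^-1 *: w n)).
    apply: hd; exact: (subspZ _ (inspan_subsp t) (ha n)).
  have e1 : x n = a n *: (v - (- (a n)^-1 *: w n)).
    by rewrite scaleNr opprK scalerDr scalerA mulfV // scale1r /w addrC subrK.
  have h2 := hB n; rewrite e1 hnormZ in h2.
  rewrite ler_pdivlMr //.
  have := cmod_ge0 (a n). nra.
have hre : forall n, `|Re (a n)| <= B / d by move=> n; exact: le_trans (Re_le_cmod _) (ha_b n).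
have [f1 [hf1 [ar har]]] := BWr hre.
have him : forall n, `|Im (a (f1 n))| <= B / d by move=> n; exact: le_trans (Im_le_cmod _) (ha_b _).
have [f2 [hf2 [ai hai]]] := BWr him.
pose g := f1 \o f2.
have hg : incr g := incr_comp hf1 hf2.
have har' : rconv (fun n => Re (a (g n))) ar.
  exact: (rconv_subseq (r := fun n => Re (a (f1 n)))) hf2 har.
have hai' : rconv (fun n => Im (a (g n))) ai by exact: hai.
have hwb : exists B', forall n, hn ((w \o g) n) <= B'.
  exists (B + B / d * hn v) => n /=.
  apply: le_trans (hnormD _ _) _; rewrite hnormN hnormZ.
  have := hB (g n); have := ha_b (g n); have := hnorm_ge0 v; have := cmod_ge0 (a (g n)). nra.
have [f3 [hf3 [l' [hl' hc']]]] := IH (w \o g) hwb (fun n => ha (g n)).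
exists (g \o f3); split; first exact: incr_comp hg hf3.
exists ((ar +i* ai) *: v + l'); split.
  by exists (ar +i* ai); rewrite addrAC subrr add0r.
have h1 := hconv_cscale v (rconv_subseq (r := fun n => Re (a (g n))) hf3 har')
  (rconv_subseq (r := fun n => Im (a (g n))) hf3 hai').
have := hconv_add h1 hc'; apply: hconv_ext => n /=.
by rewrite /w addrC subrK.
Qed.


Lemma rconv_const (L : R) : rconv (fun _ => L) L.
Proof. by move=> e e0; exists 0%N => n _; rewrite subrr normr0. Qed.

Lemma FDmin F t (g : H -> R) : closed_subspace ip F -> (forall x, F x -> inspan t x) ->
  (exists x, F x /\ hn x = 1) -> (forall x, 0 <= g x) ->
  (forall u l, hconverges ip u l -> rconv (fun n => g (u n)) (g l)) ->
  exists x0, [/\ F x0, hn x0 = 1 & forall x, F x -> hn x = 1 -> g x0 <= g x].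
Proof.
move=> hF hFt [y0 [Fy0 hy0]] g0 gc.
pose S := [set g x | x in [set x | F x /\ hn x = 1]].
have Sne : S !=set0 by exists (g y0), y0.
have Slb : has_lbound S by exists 0 => _ [x _ <-]; exact: g0.
pose m := inf S.
have hx : forall n : nat, exists x, (F x /\ hn x = 1) /\ g x < m + n.+1%:R^-1.
  move=> n; case: (@inf_adherent _ S n.+1%:R^-1 _ (conj Sne Slb)).
    by rewrite invr_gt0 ltr0n.
  by move=> _ [x hx1 <-] h; exists x.
have [x hxx] := choice hx.
have hxb : exists B, forall n, hn (x n) <= B by exists 1 => n; rewrite (hxx n).1.2.
have [f [hf [l [hl hc]]]] := Kcompact hxb (fun n => hFt _ (hxx n).1.1).
have Fl : F l by case: hF => _ _ hcl; apply: hcl hc => n; exact: (hxx (f n)).1.1.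
have hl1 : hn l = 1.
  apply: (rconv_uniq (hconv_norm hc)).
  by apply: (@eq_ind _ _ (fun r => rconv r 1) (rconv_const 1)); apply/funext => n /=; rewrite (hxx (f n)).1.2.
exists l; split => // z Fz hz.
have mz : m <= g z by apply: (ge_inf Slb); exists z.
suff : g l - m <= 0 by lra.
apply: le0_eps => e e0.
have e2 : 0 < e / 2 by rewrite divr_gt0.
have [k hk] := small_inv e2.
have [N hN] := gc _ _ hc _ e2.
pose n := maxn N k.
have h1 := hN n (leq_maxl _ _).
have h2 := (hxx (f n)).2.
have h3 : ((f n).+1%:R : R)^-1 <= k.+1%:R^-1.
  apply: inv_mono; exact: leq_trans (leq_maxr N k) (incr_ge hf n).
rewrite /= in h1.
have := ler_norm (g (x (f n)) - g l). rewrite distrC in h1.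
have := ler_norm (g l - g (x (f n))). move: h2 h3; set q := (f n).+1%:R^-1 => h2 h3. clearbody m n. move: hk h3; set r := k.+1%:R^-1 => hk h3. lra.
Qed.

Lemma nsqN x : nsq (- x) = nsq x.
Proof. by rewrite -!hnorm_sq hnormN. Qed.
Lemma para a b : nsq (a - b) + nsq (a + b) = 2 * nsq a + 2 * nsq b.
Proof.
rewrite !nsq_add nsqN ipNr.
have -> : Re (- ip a b) = - Re (ip a b) by case: (ip a b).
ring.
Qed.
Lemma sq_le (a b : R) : 0 <= a -> a <= b -> a ^+ 2 <= b ^+ 2.
Proof. move=> a0 ab; rewrite ler_pXn2r // ?nnegrE //; exact: le_trans ab. Qed.

Lemma PT N : closed_subspace ip N -> hcomplete ip ->
  forall x, exists z, N z /\ forall n, N n -> ip (x - z) n = 0.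
Proof.
move=> hN hcomp x.
have N0 : N 0 by case: hN.
pose D := [set hn (x - n) | n in N].
have Dne : D !=set0 by exists (hn (x - 0)); exists 0.
have Dlb : has_lbound D by exists 0 => _ [n _ <-]; exact: hnorm_ge0.
pose d := inf D.
have d0 : 0 <= d by apply: lb_le_inf Dne _ => _ [n _ <-]; exact: hnorm_ge0.
have hmin : forall n, N n -> d <= hn (x - n) by move=> n Nn; apply: (ge_inf Dlb); exists n.
have hs : forall k : nat, exists n, N n /\ hn (x - n) < d + k.+1%:R^-1.
  move=> k; case: (@inf_adherent _ D k.+1%:R^-1 _ (conj Dne Dlb)).
    by rewrite invr_gt0 ltr0n.
  by move=> _ [n hn1 <-] h; exists n.
have [s hs'] := choice hs.
have key : forall k j, nsq (s j - s k) <= 2 * nsq (x - s k) + 2 * nsq (x - s j) - 4 * d ^+ 2.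
  move=> k j.
  pose mm := (2^-1 : R[i]) *: (s k + s j).
  have Nm : N mm by apply: closed_subspZ => //; apply: closed_subspD => //; [exact: (hs' k).1 | exact: (hs' j).1].
  have hm := hmin _ Nm.
  have e1 : (x - s k) + (x - s j) = (2 : R[i]) *: (x - mm).
    rewrite scalerBr /mm scalerA mulfV ?scale1r; last by rewrite eq_complex /= ?oner_eq0 ?pnatr_eq0 ?andbF ?andbT //; lra.
    by rewrite scaler_nat mulr2n opprD addrACA.
  have := para (x - s k) (x - s j).
  have r2 : (Re (2:R[i]) ^+ 2 + Im (2:R[i]) ^+ 2) = 4 by rewrite /=; ring.
  have e2 : x - s k - (x - s j) = s j - s k by rewrite opprB addrC addrA subrK.
  rewrite e1 nsqZ r2 e2.
  have h2 : d ^+ 2 <= nsq (x - mm) by rewrite -hnorm_sq; apply: sq_le.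
  rewrite /=. lra.
have hcau : hcauchy ip s.
  move=> e e0.
  have c0 : 0 < e ^+ 2 / (4 * (2 * d + 1)) by apply: divr_gt0; [exact: exprn_gt0 | lra].
  have [k hk] := small_inv c0.
  have dl : 0 < k.+1%:R^-1 :> R by rewrite invr_gt0 ltr0n.
  have dl1 : k.+1%:R^-1 <= 1 :> R by rewrite invf_le1 ?ler1n ?ltr0n.
  move: hk dl dl1; set r := k.+1%:R^-1 => hk dl dl1.
  exists k => m n hm hn'.
  have bnd : forall j, (k <= j)%N -> nsq (x - s j) <= (d + r) ^+ 2.
    move=> j hj; rewrite -hnorm_sq; apply: sq_le; first exact: hnorm_ge0.
    apply: ltW; apply: lt_le_trans (hs' j).2 _; rewrite lerD2l; exact: inv_mono.
  have b1 := bnd m hm; have b2 := bnd n hn'.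
  have hkey := key n m.
  rewrite ltr_pdivlMr in hk; last lra.
  have hrr : r * r <= r by rewrite -{3}[r]mulr1; apply: ler_wpM2l; [exact: ltW|].
  have hsq : nsq (s m - s n) < e ^+ 2 by nra.
  rewrite -(@ltr_pXn2r _ 2) ?nnegrE ?hnorm_ge0 ?(ltW e0) // hnorm_sq; exact: hsq.
have [z hz] := hcomp s hcau.
have Nz : N z by case: hN => _ _ hcl; apply: hcl hz => n; exact: (hs' n).1.
have zmin : hn (x - z) <= d.
  suff : hn (x - z) - d <= 0 by lra.
  apply: le0_eps => e e0.
  have e2 : 0 < e / 2 by rewrite divr_gt0.
  have [k hk] := small_inv e2.
  have [N' hN'] := hz _ e2.
  pose n := maxn N' k.
  have h1 := hN' n (leq_maxl _ _).
  have h2 := (hs' n).2.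
  have h3 : (n.+1%:R : R)^-1 <= k.+1%:R^-1 by apply: inv_mono; exact: leq_maxr.
  move: h2 h3 hk; set q := n.+1%:R^-1; set r := k.+1%:R^-1 => h2 h3 hk.
  have := hnormD (x - s n) (s n - z); rewrite addrA subrK. lra.
exists z; split => // n Nn.
pose a := ip (x - z) n.
pose tt := (nsq n + 1)^-1.
have tt0 : 0 < tt by rewrite invr_gt0; have := nsq_ge0 n; lra.
have htt : tt * (nsq n + 1) = 1 by rewrite mulVf //; have := nsq_ge0 n; lra.
have Nzs : N (z + (tt%:C * a) *: n) by apply: closed_subspD => //; exact: closed_subspZ.
have h1 := le_trans zmin (hmin _ Nzs).
have h2 : nsq (x - z) <= nsq (x - z - (tt%:C * a) *: n).
  rewrite -!hnorm_sq; apply: sq_le; first exact: hnorm_ge0.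
  by rewrite opprD addrA in h1.
rewrite nsq_sub in h2.
have nn0 := nsq_ge0 n.
move: h2 htt; rewrite /a; case: (ip (x - z) n) => p q /= h2 htt.
have e : tt * nsq n = 1 - tt by lra.
have hint : tt * nsq n * (tt * (p ^+ 2 + q ^+ 2)) = (1 - tt) * (tt * (p ^+ 2 + q ^+ 2)) by rewrite e.
have h3 : 0 <= - (tt * (p ^+ 2 + q ^+ 2)) * (1 + tt) by nra.
have hA0 : 0 <= p ^+ 2 + q ^+ 2 by rewrite addr_ge0 ?sqr_ge0.
have hA : p ^+ 2 + q ^+ 2 <= 0.
  rewrite leNgt; apply/negP => hA.
  have : 0 < tt * (p ^+ 2 + q ^+ 2) * (1 + tt) by rewrite !mulr_gt0 //; lra.
  lra.
have hp : p = 0 by nra.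
have hq : q = 0 by nra.
by rewrite hp hq.
Qed.


Lemma Nstar_of_min Q M : (exists w, [/\ M w, hn w = 1 &
    forall x, M x -> hn x = 1 -> hn (Q w) <= hn (Q x)]) -> satisfies_Nstar ip Q M.
Proof.
case=> w [Mw hw hmin]; exists w; split => //.
rewrite /lower_bound_on.
set S := [set hn (Q x) | x in [set x | M x /\ hn x = 1]].
have Slb : has_lbound S by exists 0 => _ [x _ <-]; exact: hnorm_ge0.
apply/eqP; rewrite eq_le; apply/andP; split.
- apply: lb_le_inf; first by exists (hn (Q w)), w.
  by move=> _ [x [Mx hx] <-]; exact: hmin.
- by apply: (ge_inf Slb); exists w.
Qed.

Lemma unit_of_nonzero M : closed_subspace ip M -> M <> [set 0] -> exists x, M x /\ hn x = 1.
Proof.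
move=> hM M0.
case: (pselect (exists x, M x /\ x != 0)) => [[x [Mx x0]]|h].
  exists ((hn x)^-1%:C *: x); split; [exact: closed_subspZ | exact: hnorm_unit].
exfalso; apply: M0; apply/seteqP; split => x /=.
  move=> Mx; case: (eqVneq x 0) => // x0; exfalso; apply: h; by exists x.
by move=> ->; case: hM.
Qed.

Section Suff.
Variable Q : H -> H.
Hypothesis hQ : orth_projection ip Q.

Lemma Plin : lin (fun x => x - Q x).
Proof.
move=> a x y /=.
by rewrite (Qlin hQ) scalerBr opprD !addrA; congr (_ + _); rewrite addrAC.
Qed.

Lemma suff_range : finite_dim (range Q) -> satisfies_ANstar ip Q.
Proof.
move=> hfd M hM M0.
have [s [_ hs]] := fd_inspan hfd.
have hQs : forall x, inspan s (Q x) by move=> x; apply: hs; exists x.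
apply: Nstar_of_min.
case: (pselect (exists x, M x /\ x != 0 /\ Q x = 0)) => [[x [Mx [x0 Qx]]]|hno].
  exists ((hn x)^-1%:C *: x); split; [exact: closed_subspZ | exact: hnorm_unit |].
  move=> y _ _; rewrite (linZ (Qlin hQ)) Qx scaler0 hnorm0; exact: hnorm_ge0.
have hinj : forall x, M x -> Q x = 0 -> x = 0.
  move=> x Mx Qx; case: (eqVneq x 0) => // x0; exfalso; apply: hno; by exists x.
have [t [_ ht]] := FD_inj (Qlin hQ) (closed_subsp hM) (fun x _ => hQs x) hinj.
have [w [Mw hw hmin]] := FDmin hM ht (unit_of_nonzero hM M0) (fun x => hnorm_ge0 (Q x))
  (fun u l hc => hconv_norm (hconv_bl (Qbl hQ) hc)).
by exists w.
Qed.

Lemma suff_ker : hcomplete ip -> finite_dim (kernel Q) -> satisfies_ANstar ip Q.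
Proof.
move=> hcomp hfd M hM M0.
have [s [_ hs]] := fd_inspan hfd.
pose P x := x - Q x.
have hP : lin P := Plin.
have QP x : Q (P x) = 0 by rewrite /P (linB (Qlin hQ)) (QQ hQ) subrr.
have hPs : forall x, inspan s (P x) by move=> x; apply: hs; exact: QP.
have [M0' Ml Mc] := hM.
pose N := [set x | M x /\ P x = 0].
have hN : closed_subspace ip N.
  split.
  - by split => //; rewrite (lin0 hP).
  - move=> a x y [Mx Px] [My Py]; split; first exact: Ml.
    by rewrite hP Px Py scaler0 addr0.
  - move=> u l hu hl; split; first by apply: Mc hl => n; exact: (hu n).1.
    have h1 : hconverges ip (fun n => P (u n)) (P l) := hconv_sub hl (hconv_bl (Qbl hQ) hl).
    have h2 : hconverges ip (fun n => P (u n)) 0.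
      by apply: (hconv_ext (u := fun _ => 0)) (hconv_const 0) => n; rewrite (hu n).2.
    exact: hconv_uniq h1 h2.
pose M1 := [set x | M x /\ forall n, N n -> ip x n = 0].
have hM1 : closed_subspace ip M1.
  split.
  - by split => // n _; rewrite ip0l.
  - move=> a x y [Mx hx] [My hy]; split; first exact: Ml.
    by move=> n Nn; rewrite ipL hx // hy // mulr0 addr0.
  - move=> u l hu hl; split; first by apply: Mc hl => n; exact: (hu n).1.
    by move=> n Nn; apply: (ip_closed hl) => k; exact: (hu k).2 n Nn.
have hinj : forall x, M1 x -> P x = 0 -> x = 0.
  move=> x [Mx hx] Px; apply: ip_eq0; apply: hx; by split.
have [t [_ ht]] := FD_inj hP (closed_subsp hM1) (fun x _ => hPs x) hinj.
have decomp : forall x, M x -> exists z, N z /\ M1 (x - z).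
  move=> x Mx; have [z [Nz hz]] := PT hN hcomp x.
  exists z; split => //; split => //; exact: closed_subspB hM Mx Nz.1.
have pythP : forall x, nsq x = nsq (Q x) + nsq (P x) := pyth hQ.
apply: Nstar_of_min.
case: (pselect (exists x, M1 x /\ hn x = 1)) => [hu|hno].
  have [w [M1w hw hmin]] := FDmin hM1 ht hu (fun x => hnorm_ge0 (Q x))
    (fun u l hc => hconv_norm (hconv_bl (Qbl hQ) hc)).
  exists w; split; [exact: M1w.1 | exact: hw |].
  move=> x Mx hx.
  have [z [Nz M1y]] := decomp x Mx.
  move: M1y; set y := x - z => M1y.
  have Py : P x = P y by rewrite /y (linB hP) Nz.2 subr0.
  have nx : nsq x = nsq z + nsq y.
    have -> : x = z + y by rewrite /y addrC subrK.
    rewrite nsq_add ipC (M1y.2 z Nz) conjc0 /=. lra.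
  have nx1 : nsq x = 1 by rewrite -hnorm_sq hx expr1n.
  have nw1 : nsq w = 1 by rewrite -hnorm_sq hw expr1n.
  have hPw : nsq (P y) <= nsq (P w).
    case: (eqVneq y 0) => [->| y0].
      by rewrite (lin0 hP) nsq0; exact: nsq_ge0.
    pose v := (hn y)^-1%:C *: y.
    have M1v : M1 v by exact: closed_subspZ.
    have hv : hn v = 1 by exact: hnorm_unit.
    have h1 := hmin v M1v hv.
    have h2 : nsq (Q w) <= nsq (Q v) by rewrite -!hnorm_sq; apply: sq_le => //; exact: hnorm_ge0.
    have nv1 : nsq v = 1 by rewrite -hnorm_sq hv expr1n.
    have h3 := pythP v; have h4 := pythP w.
    have hy0 : 0 < hn y.
      rewrite lt_def hnorm_ge0 andbT; apply/eqP => /hnorm_eq0 h; by rewrite h eqxx in y0.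
    have ey : y = (hn y)%:C *: v by rewrite /v scalerA -rmorphM mulfV ?gt_eqF // scale1r.
    have h5 : nsq (P y) = nsq y * nsq (P v).
      by rewrite {1}ey (linZ hP) nsqZ /= expr0n /= addr0 hnorm_sq.
    have := nsq_ge0 z; have := nsq_ge0 y; have := nsq_ge0 (P v); have := nsq_ge0 (Q v).
    nra.
  have h6 := pythP x; have h7 := pythP w.
  apply: hnorm_le. rewrite Py in h6. lra.
have [x0 [Mx0 hx0]] := unit_of_nonzero hM M0.
have all1 : forall x, M x -> hn x = 1 -> hn (Q x) = 1.
  move=> x Mx hx; have [z [Nz M1y]] := decomp x Mx.
  have y0 : x - z = 0.
    case: (eqVneq (x - z) 0) => // y0; exfalso; apply: hno.
    exists ((hn (x - z))^-1%:C *: (x - z)); split; [exact: closed_subspZ | exact: hnorm_unit].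
  have xz : x = z by apply/eqP; rewrite -subr_eq0 y0.
  have : P x = 0 by rewrite xz; exact: Nz.2.
  by rewrite /P => /eqP; rewrite subr_eq0 => /eqP <-.
exists x0; split => // x Mx hx; by rewrite all1 ?all1.
Qed.
End Suff.

End Hilb.

Theorem theorem3p10 (R : realType) (H : lmodType R[i]) (ip : H -> H -> R[i])
  (Q : H -> H) :
  is_hilbert ip -> orth_projection ip Q ->
  (satisfies_ANstar ip Q <->
   finite_dim (kernel Q) \/ finite_dim (range Q)).
Proof.
move=> [[ipL ipC ipge ipeq] hcomp] hQ; split.
  exact: (nec ipL ipC ipge ipeq hQ).
case=> h.
  exact: (suff_ker ipL ipC ipge ipeq hQ hcomp h).
exact: (suff_range ipL ipC ipge ipeq hQ h).
Qed.
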